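(* Let $J_{nonlsd}\subset MPR$ be the subgroup spanned by all permutation words that are not lsd. Then $J_{nonlsd}$ is a two-sided ideal of the algebra $(MPR,m')$.
   Context: A permutation word of length $n$ is a word $[s_1,\dots,s_n]$ over $\mathbf N$ in which each of $1,\dots,n$ occurs exactly once; $S_n$ denotes the set of these; the empty word is the permutation word of length $0$. Its descent set is $\mathrm{desc}(\sigma)=\{i\in\{1,\dots,n-1\}:s_i>s_{i+1}\}$. A permutation $\sigma\in S_n$ is lsd if it is the lexicographically smallest element of $\{\tau\in S_n:\mathrm{desc}(\tau)=\mathrm{desc}(\sigma)\}$. $*$ is concatenation, $\mathrm{supp}$ the set of letters of a word, and for a word $\alpha$ over $\mathbf N$ without repeated letters $\mathrm{st}(\alpha)$ replaces its letters by $1,\dots,\mathrm{length}(\alpha)$ via the order-preserving bijection. $(MPR,m')$ is the free abelian group on all permutation words with product defined for $\sigma\in S_m$, $\tau\in S_n$ by $m'(\sigma\otimes\tau)=\sum u*v$ over all pairs of words $u,v$ over $\mathbf N$ with $\mathrm{supp}(u)\cup\mathrm{supp}(v)=\{1,\dots,m+n\}$ (disjointly), $\mathrm{st}(u)=\sigma$, $\mathrm{st}(v)=\tau$. *)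

(* Defs.v *)
From mathcomp Require Import all_boot all_order all_algebra.
Set Implicit Arguments. Unset Strict Implicit. Unset Printing Implicit Defensive.
Import GRing.Theory.
Local Open Scope ring_scope.

Definition is_perm_word (w : seq nat) : bool := perm_eq w (iota 1 (size w)).

(* descent set {i in 1..n-1 : s_i > s_(i+1)} (1-indexed positions) *)
Definition desc (w : seq nat) : seq nat :=
  [seq i <- iota 1 (size w).-1 | (nth 0 w i < nth 0 w i.-1)%N].

Fixpoint lexle (s t : seq nat) : bool :=
  match s, t with
  | [::], _ => true
  | _ :: _, [::] => false
  | x :: s', y :: t' => (x < y)%N || ((x == y) && lexle s' t')
  end.

Definition lsd (s : seq nat) : Prop :=
  is_perm_word s /\
  forall t : seq nat, is_perm_word t -> size t = size s -> desc t = desc s ->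
    lexle s t.

Definition st (a : seq nat) : seq nat :=
  [seq (count (fun y => (y < x)%N) a).+1 | x <- a].

(* Elements of MPR are modelled as int-valued functions on words:
   f = sum_p p.1 * [p.2] for a finite list of (coefficient, perm word) pairs. *)
Definition lin_comb (s : seq (int * seq nat)) : seq nat -> int :=
  fun w => \sum_(p <- s) p.1 * (p.2 == w)%:R.

Definition in_MPR (f : seq nat -> int) : Prop :=
  exists s : seq (int * seq nat),
    all (fun p => is_perm_word p.2) s /\ forall w, f w = lin_comb s w.

Definition in_Jnonlsd (f : seq nat -> int) : Prop :=
  exists s : seq (int * seq nat),
    (forall p, p \in s -> is_perm_word p.2 /\ ~ lsd p.2) /\
    forall w, f w = lin_comb s w.

(* m' on basis elements: coefficient of the word w in m'(sigma (x) tau),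
   i.e. the number of pairs (u,v) with u*v = w, supp u, supp v a disjoint
   decomposition of {1..m+n}, st u = sigma, st v = tau. *)
Definition mbasis (sigma tau : seq nat) (w : seq nat) : int :=
  \sum_(k < (size w).+1)
     ((is_perm_word w && (size w == size sigma + size tau)%N
       && (st (take k w) == sigma) && (st (drop k w) == tau)) : bool)%:R.

(* bilinear extension of m': (f g)(w) = sum over the ways of writing
   w = u*v (i.e. u = take k w, v = drop k w) of f(st u) g(st v),
   w a permutation word (so supp u, supp v partition {1..|w|}). *)
Definition mprod (f g : seq nat -> int) : seq nat -> int :=
  fun w => \sum_(k < (size w).+1)
    (is_perm_word w)%:R * (f (st (take k w)) * g (st (drop k w))).

(* Main.v *)
Require Import Defs.
From mathcomp Require Import all_boot all_order all_algebra zify.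
Import GRing.Theory.
Set Implicit Arguments. Unset Strict Implicit.
Open Scope nat_scope.

Lemma lexle_ge s t : size s = size t ->
  (forall p, (p < size s)%N -> (forall i, (i < p)%N -> nth 0 s i = nth 0 t i) ->
     (nth 0 s p <= nth 0 t p)%N) -> lexle s t.
Proof.
elim: s t => [|x s IH] [|y t] //= [Hs] H.
have H0 := H 0%N erefl (fun i (Hi : (i < 0)%N) => False_ind _ (notF Hi)).
rewrite /= in H0.
case: (ltngtP x y) H0 => //= Exy _; subst y.
apply: IH => // p Hp Hag.
apply: (H p.+1) => // -[|i] Hi //=; exact: Hag.
Qed.

Lemma lexle_gt s t p : (p < size s)%N -> (p < size t)%N ->
  (forall i, (i < p)%N -> nth 0 s i = nth 0 t i) -> (nth 0 t p < nth 0 s p)%N ->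
  ~~ lexle s t.
Proof.
elim: s t p => [|x s IH] [|y t] [|p] //=.
  move=> _ _ _ H; rewrite ltnNge (ltnW H) /=.
  by rewrite (gtn_eqF H).
move=> Hp Ht Hag Hlt.
have /= Exy := Hag 0%N erefl; subst y.
rewrite ltnn eqxx /=; apply: (IH t p) => // i Hi; exact: (Hag i.+1).
Qed.

Lemma pw_mem w x : is_perm_word w -> (x \in w) = (0 < x <= size w).
Proof. by move=> H; rewrite (perm_mem H) mem_iota add1n ltnS. Qed.

Lemma pw_uniq w : is_perm_word w -> uniq w.
Proof. by move=> H; rewrite (perm_uniq H) iota_uniq. Qed.

Definition unitdesc (w : seq nat) := forall i, i.+1 < size w ->
  nth 0 w i.+1 < nth 0 w i -> nth 0 w i = (nth 0 w i.+1).+1.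

Lemma desc_iff w t i : size t = size w -> desc t = desc w -> i.+1 < size w ->
  (nth 0 t i.+1 < nth 0 t i) = (nth 0 w i.+1 < nth 0 w i).
Proof.
move=> Hs E Hi; have := congr1 (fun d => i.+1 \in d) E.
rewrite /desc /= !mem_filter !mem_iota Hs.
have -> : (1 <= i.+1 < 1 + (size w).-1) = true by lia.
by rewrite !andbT.
Qed.

Lemma run_end w p : p < size w -> exists r, p <= r < size w /\
  (forall j, p <= j < r -> nth 0 w j.+1 < nth 0 w j) /\
  (r.+1 < size w -> nth 0 w r <= nth 0 w r.+1).
Proof.
move=> Hp; have [d Hd] : exists d, size w = p + d.+1 by exists (size w - p.+1); lia.
elim: d p Hp Hd => [|d IH] p Hp Hd.
  exists p; split; first lia; split; first by move=> j; lia.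
  by lia.
case: (ltnP (nth 0 w p.+1) (nth 0 w p)) => Hlt.
  have [r [H1 [H2 H3]]] := IH p.+1 ltac:(lia) ltac:(lia).
  exists r; split; first lia; split=> // j Hj.
  case: (j =P p) => [->//|Hjp]; apply: H2; lia.
exists p; split; first lia; split=> // j; lia.
Qed.

Lemma chain_w w p r : unitdesc w -> r < size w ->
  (forall j, p <= j < r -> nth 0 w j.+1 < nth 0 w j) ->
  forall k, k <= r - p -> nth 0 w (r - k) = nth 0 w r + k.
Proof.
move=> Hu Hr Hd; elim=> [|k IH] Hk; first by rewrite subn0 addn0.
have E : r - k = (r - k.+1).+1 by lia.
have := Hu (r - k.+1) ltac:(lia); rewrite -E => H.
have Hd' : nth 0 w (r - k) < nth 0 w (r - k.+1) by rewrite E; apply: Hd; lia.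
rewrite (H Hd') IH; lia.
Qed.

Lemma chain_t w p r : r < size w ->
  (forall j, p <= j < r -> nth 0 w j.+1 < nth 0 w j) ->
  forall k, k <= r - p -> nth 0 w r + k <= nth 0 w (r - k).
Proof.
move=> Hr Hd; elim=> [|k IH] Hk; first by rewrite subn0 addn0.
have E : r - k = (r - k.+1).+1 by lia.
have := Hd (r - k.+1) ltac:(lia); rewrite -E => H.
have := IH ltac:(lia); lia.
Qed.

Lemma after_run w r : unitdesc w -> uniq w -> r < size w ->
  (r.+1 < size w -> nth 0 w r <= nth 0 w r.+1) ->
  forall d, r + d.+1 < size w -> nth 0 w r < nth 0 w (r + d.+1).
Proof.
move=> Hu Hw Hr Ha; elim=> [|d IH] Hd.
  have := Ha ltac:(lia); rewrite addn1 leq_eqVlt => /orP[/eqP E|//].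
  have := nth_uniq 0 Hr Hd Hw; rewrite addn1 E eqxx; lia.
have IH' := IH ltac:(lia).
rewrite ltnNge; apply/negP => Hle.
have E : r + d.+2 = (r + d.+1).+1 by lia.
have := Hu (r + d.+1) ltac:(lia); rewrite -E => H.
have {H} H := H ltac:(lia).
have Eq : nth 0 w (r + d.+2) = nth 0 w r by lia.
have := nth_uniq 0 Hd Hr Hw; rewrite Eq eqxx; lia.
Qed.

Lemma unitdesc_lsd w : is_perm_word w -> unitdesc w -> lsd w.
Proof.
move=> Hw Hu; split=> // t Ht Hs Hd.
have Hwu := pw_uniq Hw; have Htu := pw_uniq Ht.
apply: lexle_ge => // p Hp Hag.
have [r [Hr1 [Hr2 Hr3]]] := run_end Hp.
have Hrt : r < size t by rewrite Hs; lia.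
have hw := @chain_w w p r Hu ltac:(lia) Hr2 (r - p) (leqnn _).
have Hr2t : forall j, p <= j < r -> nth 0 t j.+1 < nth 0 t j.
  move=> j Hj; rewrite (desc_iff Hs Hd); [exact: Hr2|lia].
have ht := chain_t Hrt Hr2t (leqnn (r - p)).
have E : r - (r - p) = p by lia.
rewrite E in hw ht.
suff hc : nth 0 w r <= nth 0 t r by lia.
rewrite leqNgt; apply/negP => Hlt.
have Htr : nth 0 t r \in w.
  have := mem_nth 0 Hrt; rewrite (pw_mem _ Ht) (pw_mem _ Hw) Hs //.
set q := index (nth 0 t r) w.
have Hq : q < size w by rewrite index_mem.
have Hnq : nth 0 w q = nth 0 t r by rewrite nth_index.
case: (ltnP q p) => Hqp.
  have := Hag q Hqp; rewrite Hnq => E2.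
  have Hqt : q < size t by rewrite Hs.
  have := nth_uniq 0 Hrt Hqt Htu; rewrite E2 eqxx; lia.
case: (leqP q r) => Hqr.
  have := @chain_w w p r Hu ltac:(lia) Hr2 (r - q) ltac:(lia).
  have -> : r - (r - q) = q by lia.
  lia.
have := @after_run w r Hu Hwu ltac:(lia) Hr3 (q - r.+1) ltac:(lia).
have -> : r + (q - r.+1).+1 = q by lia.
lia.
Qed.

Definition sw (z v : nat) := if v == z then z.+1 else if v == z.+1 then z else v.

Lemma sw_inv z v : sw z (sw z v) = v.
Proof. rewrite /sw; do ! case: eqP; lia. Qed.

Lemma sw_lt z x y : ~~ ((x == z) && (y == z.+1)) -> ~~ ((x == z.+1) && (y == z)) ->
  (sw z x < sw z y) = (x < y).
Proof. rewrite /sw; do ! case: eqP; lia. Qed.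

Lemma nth_inj (w : seq nat) (i j : nat) : uniq w -> i < size w -> j < size w ->
  nth 0 w i = nth 0 w j -> i = j.
Proof. by move=> Hu Hi Hj E; apply/eqP; rewrite -(nth_uniq 0 Hi Hj Hu) E. Qed.

Lemma swap_notlsd w a b z : is_perm_word w -> a.+1 < b -> b < size w ->
  nth 0 w a = z.+1 -> nth 0 w b = z -> ~ lsd w.
Proof.
move=> Hw Hab Hb Ha Hbz [_ H].
have Hwu := pw_uniq Hw.
have Hinj : injective (sw z) := can_inj (sw_inv z).
have [t Et] : exists t, t = map (sw z) w by eexists.
have Hza : z.+1 \in w.
 by rewrite -Ha mem_nth //; apply: leq_trans Hb; lia.
have Hzb : z \in w by rewrite -Hbz mem_nth.
have Hpt : perm_eq t w.
  apply: uniq_perm => //; first by rewrite Et map_inj_uniq.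
  move=> x; rewrite Et -{1}(sw_inv z x) mem_map //.
  rewrite /sw; case: eqP => [->|_]; first by rewrite Hza Hzb.
  by case: eqP => [->|_]; first by rewrite Hza Hzb.
have Hst : size t = size w by rewrite Et size_map.
have Ht : is_perm_word t by rewrite /is_perm_word Hst; exact: perm_trans Hpt Hw.
have Hd : desc t = desc w.
  rewrite /desc Hst; apply: eq_in_filter => i; rewrite mem_iota => Hi.
  rewrite Et !(nth_map 0); try lia.
  apply: sw_lt; apply/negP => /andP[/eqP E1 /eqP E2].
    rewrite -Hbz in E1; rewrite -Ha in E2.
    have := @nth_inj w i b Hwu ltac:(lia) Hb E1; have := @nth_inj w i.-1 a Hwu ltac:(lia) ltac:(lia) E2; lia.
  rewrite -Ha in E1; rewrite -Hbz in E2.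
  have := @nth_inj w i a Hwu ltac:(lia) ltac:(lia) E1; have := @nth_inj w i.-1 b Hwu ltac:(lia) Hb E2; lia.
have := H t Ht Hst Hd; apply/negP.
apply: (@lexle_gt w t a); try lia.
  move=> i Hi; rewrite Et (nth_map 0); last lia.
  rewrite /sw; case: eqP => E1.
    rewrite -Hbz in E1; have := @nth_inj w i b Hwu ltac:(lia) Hb E1; lia.
  case: eqP => E2 //.
  rewrite -Ha in E2; have := @nth_inj w i a Hwu ltac:(lia) ltac:(lia) E2; lia.
rewrite Et (nth_map 0); last lia.
rewrite Ha /sw eqn_leq ltnn /= eqxx; lia.
Qed.

Lemma pos_ex w x : is_perm_word w -> 0 < x <= size w ->
  exists q, q < size w /\ nth 0 w q = x.
Proof.
move=> Hw Hx; have Hm : x \in w by rewrite (pw_mem _ Hw).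
by exists (index x w); rewrite index_mem nth_index.
Qed.

Lemma lsd_unitdesc w : is_perm_word w -> lsd w -> unitdesc w.
Proof.
move=> Hw Hl.
have Hwu := pw_uniq Hw.
have A : forall a b z, a < b -> b < size w -> nth 0 w a = z.+1 -> nth 0 w b = z -> b = a.+1.
  move=> a b z Hab Hb Ha Hbz; case: (ltnP a.+1 b) => Hc; last lia.
  by case: (swap_notlsd Hw Hc Hb Ha Hbz Hl).
have Hrange : forall q, q < size w -> 0 < nth 0 w q <= size w.
  by move=> q Hq; rewrite -(pw_mem _ Hw) mem_nth.
move=> i Hi Hvu.
have [u Eu] : exists u, nth 0 w i = u by eexists.
have [v Ev] : exists v, nth 0 w i.+1 = v by eexists.
rewrite Eu Ev in Hvu *.
case: (u =P v.+1) => // Hne; exfalso.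
have Hv := Hrange i.+1 Hi; have Hu := Hrange i ltac:(lia).
rewrite Eu Ev in Hv Hu.
have S : forall k j, v + j + k = u -> 1 <= j -> forall q, q < size w ->
    nth 0 w q = v + j -> i.+1 < q -> False.
  elim=> [|k IH] j Hk Hj q Hq Hqv Hiq.
    have E0 : nth 0 w q = nth 0 w i by rewrite Hqv Eu; lia.
    have := @nth_inj w q i Hwu Hq ltac:(lia) E0; lia.
  have [q' [Hq' Hq'v]] := pos_ex Hw (x := v + j.+1) ltac:(lia).
  case: (ltngtP q' i.+1) => Hc.
  - have := A q' q (v + j) ltac:(lia) Hq ltac:(rewrite Hq'v; lia) Hqv; lia.
  - apply: (IH j.+1) Hq'v Hc => //; lia.
  - by move: Hq'v; rewrite Hc Ev; lia.
have [q1 [Hq1 Hq1v]] := pos_ex Hw (x := v.+1) ltac:(lia).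
case: (ltngtP q1 i.+1) => Hc.
- have := A q1 i.+1 v Hc Hi Hq1v Ev; move=> E.
  have E' : q1 = i by lia.
  by move: Hq1v; rewrite E' Eu.
- exact: (S (u - v.+1) 1 ltac:(lia) erefl q1 Hq1 ltac:(by rewrite addn1) Hc).
- by move: Hq1v; rewrite Hc Ev; lia.
Qed.

Lemma count_ltS (a : seq nat) x :
  count (fun y => y < x.+1) a = count (fun y => y < x) a + count_mem x a.
Proof.
elim: a => [|y a IH] //=; rewrite IH ltnS leq_eqVlt.
case: (y =P x) => [->|Hne] /=; first by rewrite ltnn /=; lia.
by rewrite /= add0n; lia.
Qed.

Lemma count_mono (a : seq nat) x y : x <= y ->
  count (fun z => z < x) a <= count (fun z => z < y) a.
Proof. by move=> H; apply: sub_count => z /= Hz; apply: leq_trans H. Qed.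

Lemma count_lt (a : seq nat) x y : x < y -> x \in a ->
  count (fun z => z < x) a < count (fun z => z < y) a.
Proof.
move=> H Hx; apply: leq_trans (count_mono a H).
rewrite count_ltS -addn1 leq_add2l.
rewrite -has_count; apply/hasP; exists x => //=.
Qed.

Lemma st_size a : size (st a) = size a.
Proof. by rewrite size_map. Qed.

Lemma st_nth a i : i < size a ->
  nth 0 (st a) i = (count (fun y => y < nth 0 a i) a).+1.
Proof. by move=> H; rewrite /st (nth_map 0). Qed.

Lemma st_perm (a : seq nat) : uniq a -> is_perm_word (st a).
Proof.
move=> Hu.
have Hsu : uniq (st a).
  rewrite /st map_inj_in_uniq // => x y Hx Hy [E].
  case: (ltngtP x y) => // H.
    by have := count_lt H Hx; rewrite E ltnn.
  by have := count_lt H Hy; rewrite E ltnn.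
apply: uniq_perm => //; first exact: iota_uniq.
have Hsub : {subset st a <= iota 1 (size (st a))}.
  move=> z; rewrite /st => /mapP [x Hx ->]; rewrite mem_iota size_map.
  have := count_lt (ltnSn x) Hx; have := count_size (fun y => y < x.+1) a.
  lia.
exact: (uniq_min_size Hsu Hsub ltac:(by rewrite size_iota)).2.
Qed.

Lemma st_unitdesc (a : seq nat) : uniq a -> unitdesc a -> unitdesc (st a).
Proof.
move=> Hu Ha i; rewrite st_size => Hi.
rewrite !st_nth; try lia.
move=> Hlt.
have Hd : nth 0 a i.+1 < nth 0 a i.
  rewrite ltnNge; apply/negP => Hge.
  have := count_mono a Hge; lia.
rewrite (Ha i Hi Hd) count_ltS count_uniq_mem // mem_nth //.
lia.
Qed.

Lemma unitdesc_take w k : unitdesc w -> unitdesc (take k w).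
Proof.
move=> H i; rewrite size_take_min => Hi.
rewrite !nth_take; try lia.
apply: H; lia.
Qed.

Lemma unitdesc_drop w k : unitdesc w -> unitdesc (drop k w).
Proof.
move=> H i; rewrite size_drop => Hi.
rewrite !nth_drop !addnS.
apply: H; lia.
Qed.

Lemma lsd_factors w k : is_perm_word w -> lsd w ->
  lsd (st (take k w)) /\ lsd (st (drop k w)).
Proof.
move=> Hw Hl; have Hu := lsd_unitdesc Hw Hl; have Hwu := pw_uniq Hw.
have Ht : uniq (take k w) by apply: take_uniq.
have Hd : uniq (drop k w) by apply: drop_uniq.
split; apply: unitdesc_lsd; try apply: st_perm => //; apply: st_unitdesc => //.
  exact: unitdesc_take.
exact: unitdesc_drop.
Qed.

Close Scope nat_scope.
Local Open Scope ring_scope.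

Lemma lin_comb_nz s w : lin_comb s w != 0 -> has (fun p => p.2 == w) s.
Proof.
apply: contraR => /hasPn H; rewrite /lin_comb big_seq big1 // => p Hp.
by rewrite (negbTE (H p Hp)) mulr0.
Qed.

Lemma supp_repr (f : seq nat -> int) S : uniq S ->
  (forall w, f w != 0 -> w \in S) ->
  forall w, f w = lin_comb [seq (f x, x) | x <- S] w.
Proof.
move=> Hu HS w; rewrite /lin_comb big_map /=.
case Hw: (w \in S).
  rewrite (bigD1_seq w) //= eqxx mulr1 big1 ?addr0 // => x /negbTE ->.
  by rewrite mulr0.
have Hf : f w = 0 by apply/eqP; apply: contraFT Hw => /HS.
rewrite Hf big1_seq // => x /= Hx.
have -> : (x == w) = false by apply: contraFF Hw => /eqP <-.
by rewrite mulr0.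
Qed.

Lemma sumn_size (s : seq (seq nat)) x : x \in s -> (size x <= sumn (map size s))%N.
Proof.
elim: s => [|y s IH] //=; rewrite inE => /orP[/eqP ->|/IH H]; first exact: leq_addr.
exact: leq_trans H (leq_addl _ _).
Qed.

Lemma Jn_of_supp (h : seq nat -> int) N :
  (forall w, h w != 0 -> is_perm_word w /\ ~ lsd w /\ (size w <= N)%N) ->
  in_Jnonlsd h.
Proof.
move=> H.
set C := flatten [seq permutations (iota 1 n) | n <- iota 0 N.+1].
set S := undup [seq w <- C | h w != 0].
exists [seq (h x, x) | x <- S]; split; last first.
  apply: supp_repr; first exact: undup_uniq.
  move=> w Hw; rewrite mem_undup mem_filter Hw /=.
  have [Hp [_ Hs]] := H w Hw.
  apply/flattenP; exists (permutations (iota 1 (size w))).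
    by apply/mapP; exists (size w) => //; rewrite mem_iota; lia.
  by rewrite mem_permutations.
move=> p /mapP [x]; rewrite mem_undup mem_filter => /andP[Hx _] -> /=.
by have [? [? _]] := H x Hx.
Qed.

Lemma mprod_nz f g w : mprod f g w != 0 -> exists k,
  [/\ is_perm_word w, f (st (take k w)) != 0 & g (st (drop k w)) != 0].
Proof.
rewrite /mprod; case Hp: (is_perm_word w); last first.
  by rewrite big1 ?eqxx // => k _; rewrite mul0r.
case: (boolP [exists k : 'I_(size w).+1,
   (f (st (take k w)) != 0) && (g (st (drop k w)) != 0)]).
  by move=> /existsP [k /andP [H1 H2]] _; exists k.
move=> /existsPn Hn; rewrite big1 ?eqxx // => k _.
have := Hn k; rewrite negb_and !negbK => /orP[/eqP ->|/eqP ->].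
  by rewrite mul0r mulr0.
by rewrite !mulr0.
Qed.

Theorem proposition14p1 :
  (* J_nonlsd is an additive subgroup of MPR *)
  (forall f, in_Jnonlsd f -> in_MPR f) /\
  in_Jnonlsd (fun _ => 0) /\
  (forall f g, in_Jnonlsd f -> in_Jnonlsd g -> in_Jnonlsd (fun w => f w - g w)) /\
  (* and it is closed under left and right multiplication by MPR *)
  (forall f g, in_MPR f -> in_Jnonlsd g ->
     in_Jnonlsd (mprod f g) /\ in_Jnonlsd (mprod g f)).
Proof.
split.
  move=> f [s [Hs Hf]]; exists s; split=> //.
  by apply/allP => p /Hs [].
split.
  exists [::]; split=> // w; by rewrite /lin_comb big_nil.
split.
  move=> f g [sf [Hsf Hf]] [sg [Hsg Hg]].
  exists (sf ++ [seq (- p.1, p.2) | p <- sg]); split.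
    move=> p; rewrite mem_cat => /orP[/Hsf //|/mapP [q /Hsg Hq ->] //].
  move=> w; rewrite Hf Hg /lin_comb big_cat big_map /= -sumrN.
  by congr (_ + _); apply: eq_bigr => p _; rewrite mulNr.
move=> f g [sf [Hsf Hf]] [sg [Hsg Hg]].
have Ff : forall x, f x != 0 -> x \in [seq p.2 | p <- sf].
  move=> x; rewrite Hf => /lin_comb_nz /hasP [p Hp /eqP <-]; exact: map_f.
have Gg : forall x, g x != 0 -> x \in [seq p.2 | p <- sg] /\ ~ lsd x.
  move=> x; rewrite Hg => /lin_comb_nz /hasP [p Hp /eqP <-].
  by split; [exact: map_f | have [] := Hsg p Hp].
set N := (sumn (map size [seq p.2 | p <- sf]) + sumn (map size [seq p.2 | p <- sg]))%N.
have Hsz : forall w k, (size (take k w) = size (st (take k w)) /\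
                        size (drop k w) = size (st (drop k w)))
           /\ size w = (size (take k w) + size (drop k w))%N.
  by move=> w k; rewrite !st_size -size_cat cat_take_drop.
split; apply: (@Jn_of_supp _ N) => w /mprod_nz [k [Hp H1 H2]].
- have [Hm Hnl] := Gg _ H2; have Hm1 := Ff _ H1.
  split=> //; split.
    by move=> Hl; apply: Hnl; have [] := lsd_factors k Hp Hl.
  have [[E1 E2] E3] := Hsz w k; rewrite E3 E1 E2 /N.
  by apply: leq_add; apply: sumn_size.
- have [Hm Hnl] := Gg _ H1; have Hm1 := Ff _ H2.
  split=> //; split.
    by move=> Hl; apply: Hnl; have [] := lsd_factors k Hp Hl.
  have [[E1 E2] E3] := Hsz w k; rewrite E3 E1 E2 /N addnC.
  by apply: leq_add; apply: sumn_size.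
Qed.
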